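(* Let $\mathcal X$ be a CAT(0) cube complex, $F$ a convex subcomplex, and $f$ a $0$-cube of $F$. Let $F^\perp$ denote the orthogonal complement of $F$ at $f$, and iteratively let $(F^\perp)^\perp$ denote the orthogonal complement of $F^\perp$ at $f$, etc. Then $((F^\perp)^\perp)^\perp=F^\perp$.
   Context: Two convex subcomplexes are parallel if exactly the same hyperplanes intersect them. Orthogonal complement: for a convex subcomplex $A$, let $P_A$ be the convex hull of the union of all convex subcomplexes parallel to $A$; then there is a CAT(0) cube complex $A^\perp$ (the abstract orthogonal complement) and a cubical isometric embedding $\phi_A:A\times A^\perp\to\mathcal X$ with image $P_A$ such that $\phi_A(A\times\{t\})$ are the parallel copies of $A$ and $\phi_A(A\times\{t_0\})=A$. For a $0$-cube $a\in A$, the orthogonal complement of $A$ at $a$ is the convex subcomplex $\phi_A(\{a\}\times A^\perp)$, which contains $a$. *)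

(* Defs.v *)
(* A CAT(0) cube complex is represented by its 1-skeleton,
   a median graph (Chepoi / Roller / Gerasimov); 0-cubes are vertices, a
   subcomplex is represented by its set of 0-cubes. *)
From Stdlib Require Import Arith List.

Unset Implicit Arguments.

Inductive walk {V : Type} (adj : V -> V -> Prop) : V -> V -> nat -> Prop :=
| walk_nil : forall x, walk adj x x 0
| walk_cons : forall x y z n, adj x y -> walk adj y z n -> walk adj x z (S n).

Definition dist {V : Type} (adj : V -> V -> Prop) (x y : V) (n : nat) : Prop :=
  walk adj x y n /\ forall m, walk adj x y m -> n <= m.

Definition interval {V : Type} (adj : V -> V -> Prop) (x y z : V) : Prop :=
  exists a b, dist adj x z a /\ dist adj z y b /\ dist adj x y (a + b).

Definition median_graph {V : Type} (adj : V -> V -> Prop) : Prop :=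
  (forall x y, adj x y -> adj y x) /\
  (forall x, ~ adj x x) /\
  (forall x y, exists n, walk adj x y n) /\
  (forall x y z, exists m,
      interval adj x y m /\ interval adj y z m /\ interval adj x z m /\
      forall m', interval adj x y m' -> interval adj y z m' ->
                 interval adj x z m' -> m' = m).

Definition gconvex {V : Type} (adj : V -> V -> Prop) (S : V -> Prop) : Prop :=
  forall x y z, S x -> S y -> interval adj x y z -> S z.

Definition convex_sub {V : Type} (adj : V -> V -> Prop) (S : V -> Prop) : Prop :=
  gconvex adj S /\ exists x, S x.

(* Djokovic-Winkler relation: edges uv and xy are dual to the same hyperplane *)
Definition Theta {V : Type} (adj : V -> V -> Prop) (u v x y : V) : Prop :=
  exists a b c d, dist adj u x a /\ dist adj v y b /\ dist adj u y c /\
    dist adj v x d /\ a + b <> c + d.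

(* the hyperplane dual to the edge uv intersects the subcomplex S *)
Definition crosses {V : Type} (adj : V -> V -> Prop) (u v : V) (S : V -> Prop) : Prop :=
  exists x y, S x /\ S y /\ adj x y /\ Theta adj u v x y.

Definition parallel {V : Type} (adj : V -> V -> Prop) (A B : V -> Prop) : Prop :=
  forall u v, adj u v -> (crosses adj u v A <-> crosses adj u v B).

Definition hull {V : Type} (adj : V -> V -> Prop) (S : V -> Prop) (x : V) : Prop :=
  forall C, gconvex adj C -> (forall y, S y -> C y) -> C x.

Definition parallel_union {V : Type} (adj : V -> V -> Prop) (A : V -> Prop) (x : V) : Prop :=
  exists B, convex_sub adj B /\ parallel adj A B /\ B x.

Definition PA {V : Type} (adj : V -> V -> Prop) (A : V -> Prop) : V -> Prop :=
  hull adj (parallel_union adj A).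

(* 1-skeleton of the product cube complex A x W (A with induced structure) *)
Definition prod_adj {V W : Type} (adj : V -> V -> Prop) (adjW : W -> W -> Prop)
  (A : V -> Prop) (p q : sig A * W) : Prop :=
  (adj (proj1_sig (fst p)) (proj1_sig (fst q)) /\ snd p = snd q) \/
  (fst p = fst q /\ adjW (snd p) (snd q)).

(* (W, adjW) is an abstract orthogonal complement of A, with
   cubical isometric embedding phi : A x W -> X and base point t0 *)
Definition orth_decomp {V W : Type} (adj : V -> V -> Prop) (A : V -> Prop)
  (adjW : W -> W -> Prop) (phi : sig A * W -> V) (t0 : W) : Prop :=
  median_graph adjW /\
  (forall p q n, dist (prod_adj adj adjW A) p q n <-> dist adj (phi p) (phi q) n) /\
  (forall x, PA adj A x <-> exists p, phi p = x) /\
  (forall B, (convex_sub adj B /\ parallel adj A B) <->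
             exists t, forall x, B x <-> exists a, phi (a, t) = x) /\
  (forall a, phi (a, t0) = proj1_sig a).

(* C is the orthogonal complement of A at the 0-cube a, i.e.
   C = phi_A({a} x A^perp) *)
Definition orth_compl {V : Type} (adj : V -> V -> Prop) (A : V -> Prop) (a : V)
  (C : V -> Prop) : Prop :=
  convex_sub adj A /\
  exists (Ha : A a) (W : Type) (adjW : W -> W -> Prop) (phi : sig A * W -> V) (t0 : W),
    orth_decomp adj A adjW phi t0 /\
    forall x, C x <-> exists t, phi (exist A a Ha, t) = x.

(* Main.v *)
Require Import Defs.
From Stdlib Require Import Arith List Lia Classical ClassicalEpsilon.

Definition conn {G : Type} (e : G -> G -> Prop) := forall x y : G, exists n, walk e x y n.

Lemma walk_app {G} (e : G -> G -> Prop) x y z n m :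
  walk e x y n -> walk e y z m -> walk e x z (n + m).
Proof. intros H; revert z m; induction H; intros; simpl; auto. econstructor; eauto. Qed.

Lemma walk0 {G} (e : G -> G -> Prop) x y : walk e x y 0 -> x = y.
Proof. intro H; inversion H; auto. Qed.

Lemma walk1 {G} (e : G -> G -> Prop) x y : walk e x y 1 -> e x y.
Proof. intro H; inversion H as [|? ? ? ? Hxy Hw]; subst. apply walk0 in Hw; subst; auto. Qed.

Lemma walk_one {G} (e : G -> G -> Prop) x y : e x y -> walk e x y 1.
Proof. intro; econstructor; [eassumption| constructor]. Qed.

Lemma walk_rev {G} (e : G -> G -> Prop) x y n :
  (forall a b, e a b -> e b a) -> walk e x y n -> walk e y x n.
Proof.
  intros Hs H; induction H. constructor.
  replace (S n) with (n + 1) by lia. eapply walk_app; [eassumption| apply walk_one; auto].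
Qed.

Lemma dist_ex {G} (e : G -> G -> Prop) x y n : walk e x y n -> exists m, dist e x y m.
Proof.
  induction n as [n IH] using lt_wf_ind. intro Hw.
  destruct (classic (forall m, walk e x y m -> n <= m)) as [H|H].
  - exists n; split; auto.
  - apply not_all_ex_not in H as [m Hm].
    apply imply_to_and in Hm as [Hm1 Hm2]. apply (IH m); [lia|auto].
Qed.

Lemma dist_uniq {G} (e : G -> G -> Prop) x y n m : dist e x y n -> dist e x y m -> n = m.
Proof. intros [H1 H2] [H3 H4]. specialize (H2 m H3); specialize (H4 n H1); lia. Qed.

Definition Dd {G : Type} (e : G -> G -> Prop) (x y : G) : nat :=
  match excluded_middle_informative (exists n, dist e x y n) with
  | left h => proj1_sig (constructive_indefinite_description _ h)
  | right _ => 0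
  end.

Lemma Dd_spec {G} (e : G -> G -> Prop) x y n : walk e x y n -> dist e x y (Dd e x y).
Proof.
  intro Hw. unfold Dd. destruct excluded_middle_informative as [h|h].
  - destruct (constructive_indefinite_description _ h) as [m Hm]; simpl; auto.
  - exfalso; apply h; eapply dist_ex; eauto.
Qed.

Lemma Dd_eq {G} (e : G -> G -> Prop) x y n : dist e x y n -> Dd e x y = n.
Proof. intro H. eapply dist_uniq; [eapply Dd_spec, (proj1 H) | exact H]. Qed.

Lemma Dd_le {G} (e : G -> G -> Prop) x y n : walk e x y n -> Dd e x y <= n.
Proof. intro H. destruct (Dd_spec e x y n H) as [_ H2]. auto. Qed.

Lemma Dd_walk {G} (e : G -> G -> Prop) x y : conn e -> walk e x y (Dd e x y).
Proof. intro Hc. destruct (Hc x y) as [n Hn]. exact (proj1 (Dd_spec e x y n Hn)). Qed.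

Lemma Dd_refl {G} (e : G -> G -> Prop) x : Dd e x x = 0.
Proof. pose proof (Dd_le e x x 0 (walk_nil _ _)). lia. Qed.

Lemma Dd_tri {G} (e : G -> G -> Prop) x y z : conn e -> Dd e x z <= Dd e x y + Dd e y z.
Proof. intro Hc. apply Dd_le. apply walk_app with y; apply Dd_walk; auto. Qed.

Lemma Dd_zero {G} (e : G -> G -> Prop) x y : conn e -> Dd e x y = 0 -> x = y.
Proof. intros Hc H. pose proof (Dd_walk e x y Hc) as W. rewrite H in W. apply walk0 in W; auto. Qed.

Lemma Dd_sym {G} (e : G -> G -> Prop) x y : conn e -> (forall a b, e a b -> e b a) -> Dd e x y = Dd e y x.
Proof. intros Hc Hs. apply Nat.le_antisymm; apply Dd_le; apply walk_rev; auto; apply Dd_walk; auto. Qed.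

Lemma Dd_adj {G} (e : G -> G -> Prop) x y : e x y -> (forall z, ~ e z z) -> Dd e x y = 1.
Proof.
  intros H Hirr. pose proof (Dd_le e x y 1 (walk_one e x y H)).
  destruct (Dd e x y) eqn:E; [|lia].
  pose proof (proj1 (Dd_spec e x y 1 (walk_one e x y H))) as W. rewrite E in W.
  apply walk0 in W; subst. exfalso; eapply Hirr; eauto.
Qed.

Lemma Dd_one {G} (e : G -> G -> Prop) x y : conn e -> Dd e x y = 1 -> e x y.
Proof. intros Hc H. pose proof (Dd_walk e x y Hc) as W. rewrite H in W. apply walk1; auto. Qed.

Lemma mg_conn {V} (adj : V -> V -> Prop) : median_graph adj -> conn adj.
Proof. intros (_&_&H&_); exact H. Qed.
Lemma mg_sym {V} (adj : V -> V -> Prop) : median_graph adj -> forall a b, adj a b -> adj b a.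
Proof. intros (H&_&_&_); exact H. Qed.
Lemma mg_irr {V} (adj : V -> V -> Prop) : median_graph adj -> forall a, ~ adj a a.
Proof. intros (_&H&_&_); exact H. Qed.

Lemma interval_iff {V} (adj : V->V->Prop) x y z : conn adj ->
  (interval adj x y z <-> Dd adj x z + Dd adj z y = Dd adj x y).
Proof.
  intro Hc; split.
  - intros (a&b&H1&H2&H3). rewrite (Dd_eq _ _ _ _ H1), (Dd_eq _ _ _ _ H2), (Dd_eq _ _ _ _ H3). reflexivity.
  - intro H. exists (Dd adj x z), (Dd adj z y).
    destruct (Hc x z) as [n1 W1]; destruct (Hc z y) as [n2 W2]; destruct (Hc x y) as [n3 W3].
    rewrite H. split; [|split]; eapply Dd_spec; eauto.
Qed.

Lemma med {V} (adj : V->V->Prop) x y z : median_graph adj ->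
  exists m, Dd adj x m + Dd adj m y = Dd adj x y /\ Dd adj y m + Dd adj m z = Dd adj y z /\
    Dd adj x m + Dd adj m z = Dd adj x z /\
    forall m', Dd adj x m' + Dd adj m' y = Dd adj x y -> Dd adj y m' + Dd adj m' z = Dd adj y z ->
      Dd adj x m' + Dd adj m' z = Dd adj x z -> m' = m.
Proof.
  intro HM. pose proof (mg_conn adj HM) as Hc. destruct HM as (_&_&_&HM).
  destruct (HM x y z) as (m&H1&H2&H3&H4). exists m.
  split; [apply (proj1 (interval_iff adj _ _ _ Hc)); auto|].
  split; [apply (proj1 (interval_iff adj _ _ _ Hc)); auto|].
  split; [apply (proj1 (interval_iff adj _ _ _ Hc)); auto|].
  intros m' A1 A2 A3. apply H4; apply (proj2 (interval_iff adj _ _ _ Hc)); auto.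
Qed.

Lemma bip {V} (adj : V->V->Prop) u v w : median_graph adj -> adj u v -> Dd adj w u <> Dd adj w v.
Proof.
  intros HM Huv. pose proof (mg_conn adj HM) as Hc.
  destruct (med adj w u v HM) as (m&H1&H2&H3&_).
  assert (Duv: Dd adj u v = 1) by (apply Dd_adj; auto; apply mg_irr; auto).
  assert (Dvu: Dd adj v u = 1) by (apply Dd_adj; [apply mg_sym|apply mg_irr]; auto).
  destruct (Dd adj u m) eqn:E.
  - apply Dd_zero in E; auto. subst m. lia.
  - assert (E2: Dd adj m v = 0) by lia. apply Dd_zero in E2; auto. subst m. lia.
Qed.

Definition ThD {V} (adj : V -> V -> Prop) (u v x y : V) :=
  Dd adj u x + Dd adj v y <> Dd adj u y + Dd adj v x.

Lemma theta_iff {V} (adj : V -> V -> Prop) (u v x y : V) : conn adj -> (Theta adj u v x y <-> ThD adj u v x y).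
Proof.
  intro Hc; split.
  - intros (a&b&c&d&H1&H2&H3&H4&H5). unfold ThD.
    rewrite (Dd_eq _ _ _ _ H1), (Dd_eq _ _ _ _ H2), (Dd_eq _ _ _ _ H3), (Dd_eq _ _ _ _ H4). auto.
  - intro H. exists (Dd adj u x), (Dd adj v y), (Dd adj u y), (Dd adj v x).
    destruct (Hc u x) as [n1 W1]; destruct (Hc v y) as [n2 W2];
    destruct (Hc u y) as [n3 W3]; destruct (Hc v x) as [n4 W4].
    split; [eapply Dd_spec; eauto|]. split; [eapply Dd_spec; eauto|].
    split; [eapply Dd_spec; eauto|]. split; [eapply Dd_spec; eauto|]. exact H.
Qed.

Lemma sign {V} (adj : V -> V -> Prop) (u v w : V) : median_graph adj -> adj u v ->
  Dd adj u w + 1 = Dd adj v w \/ Dd adj v w + 1 = Dd adj u w.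
Proof.
  intros HM Huv. pose proof (mg_conn adj HM) as Hc. pose proof (mg_sym adj HM) as Hs.
  pose proof (mg_irr adj HM) as Hi.
  pose proof (bip adj u v w HM Huv) as B.
  rewrite (Dd_sym adj w u), (Dd_sym adj w v) in B by auto.
  pose proof (Dd_tri adj v u w Hc). pose proof (Dd_tri adj u v w Hc).
  assert (Dd adj u v = 1) by (apply Dd_adj; auto).
  assert (Dd adj v u = 1) by (apply Dd_adj; auto). lia.
Qed.

Lemma local {V} (adj : V -> V -> Prop) (u v x y y' : V) : median_graph adj -> adj u v -> adj x y -> adj y y' -> x <> y' ->
  Dd adj u x + 1 = Dd adj v x -> Dd adj u y' + 1 = Dd adj v y' -> Dd adj v y + 1 = Dd adj u y -> False.
Proof.
  intros HM Huv Hxy Hyy' Hne E1 E2 E3.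
  pose proof (mg_conn adj HM) as Hc. pose proof (mg_sym adj HM) as Hs. pose proof (mg_irr adj HM) as Hi.
  assert (Dxy : Dd adj x y = 1) by (apply Dd_adj; auto).
  assert (Dyx : Dd adj y x = 1) by (apply Dd_adj; auto).
  assert (Dyy : Dd adj y y' = 1) by (apply Dd_adj; auto).
  assert (Dy'y : Dd adj y' y = 1) by (apply Dd_adj; auto).
  assert (Duv : Dd adj u v = 1) by (apply Dd_adj; auto).
  assert (Dvu : Dd adj v u = 1) by (apply Dd_adj; auto).
  pose proof (Dd_tri adj u y x Hc). pose proof (Dd_tri adj u x y Hc).
  pose proof (Dd_tri adj v y x Hc).
  pose proof (Dd_tri adj u y y' Hc). pose proof (Dd_tri adj u y' y Hc).
  pose proof (Dd_tri adj v y y' Hc).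
  assert (Dxy'2 : Dd adj x y' = 2).
  { pose proof (Dd_tri adj x y y' Hc).
    destruct (Dd adj x y') as [|[|[|n]]] eqn:E.
    - apply Dd_zero in E; auto; contradiction.
    - apply Dd_one in E; auto. pose proof (bip adj x y' y HM E) as B.
      rewrite (Dd_sym adj y x), (Dd_sym adj y y') in B by auto. lia.
    - reflexivity.
    - lia. }
  rewrite (Dd_sym adj u x), (Dd_sym adj v x), (Dd_sym adj u y'), (Dd_sym adj v y'),
    (Dd_sym adj v y), (Dd_sym adj u y) in * by auto.
  destruct (med adj x y' u HM) as (m&M1&M2&M3&_).
  destruct (med adj x y' v HM) as (m2&N1&N2&N3&Nu).
  pose proof (Dd_tri adj m u v Hc). pose proof (Dd_tri adj x m v Hc).
  pose proof (Dd_tri adj y' m v Hc).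
  assert (Hy : y = m2) by (apply Nu; lia).
  assert (Hm : m = m2) by (apply Nu; lia).
  subst m2 m. lia.
Qed.

Lemma square {V} (adj : V -> V -> Prop) (u v x y x' y' : V) : median_graph adj -> adj u v ->
  adj x y -> adj y y' -> adj y' x' -> adj x' x -> x <> y' -> y <> x' ->
  ThD adj u v x y -> ThD adj u v x' y'.
Proof.
  intros HM Huv H1 H2 H3 H4 N1 N2 T. unfold ThD in *. pose proof (mg_sym adj HM) as Hs.
  pose proof (sign adj u v x HM Huv). pose proof (sign adj u v y HM Huv).
  pose proof (sign adj u v x' HM Huv). pose proof (sign adj u v y' HM Huv).
  pose proof (local adj u v x y y' HM Huv H1 H2 N1).
  pose proof (local adj v u x y y' HM (Hs _ _ Huv) H1 H2 N1).
  pose proof (local adj u v y x x' HM Huv (Hs _ _ H1) (Hs _ _ H4) N2).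
  pose proof (local adj v u y x x' HM (Hs _ _ Huv) (Hs _ _ H1) (Hs _ _ H4) N2).
  lia.
Qed.

Definition eA {V} (adj : V -> V -> Prop) (A : V -> Prop) (a b : sig A) : Prop :=
  adj (proj1_sig a) (proj1_sig b).

Lemma walk_split {V W} (adj : V->V->Prop) (adjW : W->W->Prop) (A : V -> Prop) p q n :
  walk (prod_adj adj adjW A) p q n -> exists k1 k2, walk (eA adj A) (fst p) (fst q) k1 /\
    walk adjW (snd p) (snd q) k2 /\ k1 + k2 = n.
Proof.
  induction 1 as [p|p p' q n Hpp' Hw IH].
  - exists 0, 0; split; [constructor|split; [constructor|reflexivity]].
  - destruct IH as (k1&k2&W1&W2&E). destruct Hpp' as [[H1 H2]|[H1 H2]].
    + exists (S k1), k2. rewrite H2. split; [econstructor; [exact H1|exact W1]|]. split; auto. lia.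
    + exists k1, (S k2). rewrite H1. split; auto. split; [econstructor; [exact H2|exact W2]|lia].
Qed.

Lemma lift1 {V W} (adj : V->V->Prop) (adjW : W->W->Prop) (A : V->Prop) a b k :
  walk (eA adj A) a b k -> forall s, walk (prod_adj adj adjW A) (a,s) (b,s) k.
Proof.
  induction 1 as [|x y z n H Hw IH]; intros s; [constructor|].
  econstructor; [|apply IH]. left; simpl; split; [exact H|reflexivity].
Qed.

Lemma lift2 {V W} (adj : V->V->Prop) (adjW : W->W->Prop) (A : V->Prop) s t k :
  walk adjW s t k -> forall a, walk (prod_adj adj adjW A) (a,s) (a,t) k.
Proof.
  induction 1 as [|x y z n H Hw IH]; intros a; [constructor|].
  econstructor; [|apply IH]. right; simpl; split; [reflexivity|exact H].
Qed.


Lemma hull_convex {V} (adj : V -> V -> Prop) (S : V->Prop) : gconvex adj (hull adj S).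
Proof. intros x y z Hx Hy Hz C HC HS. apply (HC x y z); [apply Hx|apply Hy|]; auto. Qed.

Lemma crosses_ext {V} (adj : V -> V -> Prop) (S S' : V -> Prop) u v :
  (forall x, S x -> S' x) -> crosses adj u v S -> crosses adj u v S'.
Proof. intros E (x&y&H1&H2&H3&H4). exists x, y; auto. Qed.

Lemma par_ext {V} (adj : V -> V -> Prop) (S S' T : V -> Prop) :
  (forall x, S x <-> S' x) -> parallel adj S T -> parallel adj S' T.
Proof.
  intros E P u v Huv. rewrite <- (P u v Huv).
  split; apply crosses_ext; intros; apply E; auto.
Qed.

Lemma par_trans {V} (adj : V -> V -> Prop) (S T U : V -> Prop) :
  parallel adj S T -> parallel adj T U -> parallel adj S U.
Proof. intros P Q u v Huv. rewrite (P u v Huv). auto. Qed.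

Definition SA {V W} (A B : V->Prop) (phi : sig A * W -> V) (t : W) (x : V) : Prop :=
  exists b : sig A, B (proj1_sig b) /\ phi (b,t) = x.
Definition SW {V W} (A : V -> Prop) (phi : sig A * W -> V) (a : sig A) (x : V) : Prop :=
  exists t : W, phi (a,t) = x.

Lemma dec_W {V W} {adj : V -> V -> Prop} {A} {adjW : W -> W -> Prop} {phi t0} :
  orth_decomp adj A adjW phi t0 -> median_graph adjW.
Proof. intros (H&_); exact H. Qed.
Lemma dec_iso {V W} {adj : V -> V -> Prop} {A} {adjW : W -> W -> Prop} {phi t0} :
  orth_decomp adj A adjW phi t0 ->
  forall p q n, dist (prod_adj adj adjW A) p q n <-> dist adj (phi p) (phi q) n.
Proof. intros (_&H&_); exact H. Qed.
Lemma dec_PA {V W} {adj : V -> V -> Prop} {A} {adjW : W -> W -> Prop} {phi t0} :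
  orth_decomp adj A adjW phi t0 -> forall x, PA adj A x <-> exists p, phi p = x.
Proof. intros (_&_&H&_); exact H. Qed.
Lemma dec_par {V W} {adj : V -> V -> Prop} {A} {adjW : W -> W -> Prop} {phi t0} :
  orth_decomp adj A adjW phi t0 -> forall B, (convex_sub adj B /\ parallel adj A B) <->
             exists t, forall x, B x <-> exists a, phi (a, t) = x.
Proof. intros (_&_&_&H&_); exact H. Qed.
Lemma dec_t0 {V W} {adj : V -> V -> Prop} {A} {adjW : W -> W -> Prop} {phi t0} :
  orth_decomp adj A adjW phi t0 -> forall a, phi (a, t0) = proj1_sig a.
Proof. intros (_&_&_&_&H); exact H. Qed.

Lemma dec_DP {V W} {adj : V -> V -> Prop} {A} {adjW : W -> W -> Prop} {phi t0} :
  median_graph adj -> orth_decomp adj A adjW phi t0 ->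
  forall p q, Dd (prod_adj adj adjW A) p q = Dd adj (phi p) (phi q).
Proof.
  intros HM HD p q. destruct (mg_conn adj HM (phi p) (phi q)) as [n Hn].
  apply Dd_eq. apply (proj2 (dec_iso HD p q _)). eapply Dd_spec; eauto.
Qed.

Lemma dec_connP {V W} {adj : V -> V -> Prop} {A} {adjW : W -> W -> Prop} {phi t0} :
  median_graph adj -> orth_decomp adj A adjW phi t0 -> conn (prod_adj adj adjW A).
Proof.
  intros HM HD p q. destruct (mg_conn adj HM (phi p) (phi q)) as [n Hn].
  exists (Dd adj (phi p) (phi q)). apply (proj1 (proj2 (dec_iso HD p q _) (Dd_spec _ _ _ _ Hn))).
Qed.

Lemma dec_connA {V W} {adj : V -> V -> Prop} {A} {adjW : W -> W -> Prop} {phi t0} :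
  median_graph adj -> orth_decomp adj A adjW phi t0 -> conn (eA adj A).
Proof.
  intros HM HD a b. destruct (dec_connP HM HD (a,t0) (b,t0)) as [n Hn].
  destruct (walk_split _ _ _ _ _ _ Hn) as (k1&k2&W1&_&_). exists k1; exact W1.
Qed.

Lemma dec_connW {V W} {adj : V -> V -> Prop} {A} {adjW : W -> W -> Prop} {phi t0} :
  orth_decomp adj A adjW phi t0 -> conn adjW.
Proof. intros HD. apply mg_conn, (dec_W HD). Qed.

Lemma dec_formula {V W} {adj : V -> V -> Prop} {A} {adjW : W -> W -> Prop} {phi t0} :
  median_graph adj -> orth_decomp adj A adjW phi t0 ->
  forall a b s t, Dd (prod_adj adj adjW A) (a,s) (b,t) = Dd (eA adj A) a b + Dd adjW s t.
Proof.
  intros HM HD a b s t. apply Nat.le_antisymm.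
  - apply Dd_le. apply walk_app with (y := (b,s)).
    + apply lift1, Dd_walk, (dec_connA HM HD).
    + apply lift2, Dd_walk, (dec_connW HD).
  - destruct (walk_split _ _ _ _ _ _ (Dd_walk _ (a,s) (b,t) (dec_connP HM HD))) as (k1&k2&W1&W2&E).
    simpl in W1, W2.
    pose proof (Dd_le _ _ _ _ W1); pose proof (Dd_le _ _ _ _ W2). lia.
Qed.

Lemma dec_inj {V W} {adj : V -> V -> Prop} {A} {adjW : W -> W -> Prop} {phi t0} :
  median_graph adj -> orth_decomp adj A adjW phi t0 -> forall p q, phi p = phi q -> p = q.
Proof.
  intros HM HD p q E. apply (Dd_zero _ _ _ (dec_connP HM HD)).
  rewrite (dec_DP HM HD), E. apply Dd_refl.
Qed.

Lemma dec_to_prod {V W} {adj : V -> V -> Prop} {A} {adjW : W -> W -> Prop} {phi t0} :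
  median_graph adj -> orth_decomp adj A adjW phi t0 ->
  forall p q, adj (phi p) (phi q) -> prod_adj adj adjW A p q.
Proof.
  intros HM HD p q H. apply (Dd_one _ _ _ (dec_connP HM HD)).
  rewrite (dec_DP HM HD). apply Dd_adj; auto. apply mg_irr; auto.
Qed.

Lemma dec_to_adj {V W} {adj : V -> V -> Prop} {A} {adjW : W -> W -> Prop} {phi t0} :
  median_graph adj -> orth_decomp adj A adjW phi t0 ->
  forall p q, prod_adj adj adjW A p q -> adj (phi p) (phi q).
Proof.
  intros HM HD p q H. apply (Dd_one _ _ _ (mg_conn adj HM)).
  rewrite <- (dec_DP HM HD). pose proof (Dd_le _ _ _ _ (walk_one _ _ _ H)).
  destruct (Dd (prod_adj adj adjW A) p q) eqn:E; [|lia].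
  apply Dd_zero in E; [|apply (dec_connP HM HD)]. subst q.
  exfalso. destruct H as [[H _]|[_ H]].
  - eapply mg_irr; eauto.
  - eapply mg_irr; [apply (dec_W HD)|eauto].
Qed.

Lemma dec_DA {V W} {adj : V -> V -> Prop} {A} {adjW : W -> W -> Prop} {phi t0} :
  median_graph adj -> orth_decomp adj A adjW phi t0 ->
  forall a b, Dd (eA adj A) a b = Dd adj (proj1_sig a) (proj1_sig b).
Proof.
  intros HM HD a b. rewrite <- (dec_t0 HD a), <- (dec_t0 HD b), <- (dec_DP HM HD), (dec_formula HM HD).
  rewrite Dd_refl. lia.
Qed.

Lemma transW {V W} {adj : V -> V -> Prop} {A} {adjW : W -> W -> Prop} {phi t0} :
  median_graph adj -> orth_decomp adj A adjW phi t0 -> forall u v, adj u v ->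
  forall s s' n, walk adjW s s' n -> forall b1 b2, eA adj A b1 b2 ->
  ThD adj u v (phi (b1,s)) (phi (b2,s)) -> ThD adj u v (phi (b1,s')) (phi (b2,s')).
Proof.
  intros HM HD u v Huv s s' n Hw. pose proof (dec_W HD) as HMW.
  induction Hw as [s|s s1 s' n Hs Hw IH]; intros b1 b2 Hb T; auto.
  apply IH; auto.
  apply (square adj u v (phi (b1,s)) (phi (b2,s)) (phi (b1,s1)) (phi (b2,s1)) HM Huv); try (apply (dec_to_adj HM HD)).
  - left; simpl; split; auto.
  - right; simpl; split; auto.
  - left; simpl; split; [apply (mg_sym adj HM); exact Hb | reflexivity].
  - right; simpl; split; [reflexivity| apply (mg_sym _ HMW); auto].
  - intro E; apply (dec_inj HM HD) in E. injection E as E1 E2; subst. eapply mg_irr; eauto.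
  - intro E; apply (dec_inj HM HD) in E. injection E as E1 E2; subst. eapply mg_irr; eauto.
  - exact T.
Qed.

Lemma transA {V W} {adj : V -> V -> Prop} {A} {adjW : W -> W -> Prop} {phi t0} :
  median_graph adj -> orth_decomp adj A adjW phi t0 -> forall u v, adj u v ->
  forall c c' n, walk (eA adj A) c c' n -> forall t t', adjW t t' ->
  ThD adj u v (phi (c,t)) (phi (c,t')) -> ThD adj u v (phi (c',t)) (phi (c',t')).
Proof.
  intros HM HD u v Huv c c' n Hw. pose proof (dec_W HD) as HMW.
  induction Hw as [c|c c1 c' n Hc Hw IH]; intros t t' Ht T; auto.
  apply IH; auto.
  apply (square adj u v (phi (c,t)) (phi (c,t')) (phi (c1,t)) (phi (c1,t')) HM Huv); try (apply (dec_to_adj HM HD)).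
  - right; simpl; split; auto.
  - left; simpl; split; auto.
  - right; simpl; split; [reflexivity| apply (mg_sym _ HMW); auto].
  - left; simpl; split; [apply (mg_sym adj HM); exact Hc | reflexivity].
  - intro E; apply (dec_inj HM HD) in E. injection E as E1 E2; subst. eapply (mg_irr adj HM); eauto.
  - intro E; apply (dec_inj HM HD) in E. injection E as E1 E2; subst. eapply (mg_irr adj HM); eauto.
  - exact T.
Qed.

Lemma par_SA_dir {V W} {adj : V -> V -> Prop} {A} {adjW : W -> W -> Prop} {phi t0} :
  median_graph adj -> orth_decomp adj A adjW phi t0 -> forall (B : V -> Prop) t t' u v, adj u v ->
  crosses adj u v (SA A B phi t) -> crosses adj u v (SA A B phi t').
Proof.
  intros HM HD B t t' u v Huv (x&y&(b1&Hb1&<-)&(b2&Hb2&<-)&Hxy&HT).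
  pose proof (mg_conn adj HM) as Hc.
  apply (theta_iff _ _ _ _ _ Hc) in HT.
  pose proof (dec_to_prod HM HD _ _ Hxy) as HP.
  destruct HP as [[H1 _]|[_ H2]]; [|exfalso; simpl in H2; eapply mg_irr; [apply (dec_W HD)|eauto]].
  destruct (dec_connW HD t t') as [n Hn].
  exists (phi (b1,t')), (phi (b2,t')). split; [exists b1; auto|]. split; [exists b2; auto|]. split.
  - apply (dec_to_adj HM HD). left; simpl; auto.
  - apply (theta_iff _ _ _ _ _ Hc). eapply (transW HM HD); eauto.
Qed.

Lemma par_SA {V W} {adj : V -> V -> Prop} {A} {adjW : W -> W -> Prop} {phi t0} :
  median_graph adj -> orth_decomp adj A adjW phi t0 -> forall (B : V -> Prop) t t',
  parallel adj (SA A B phi t) (SA A B phi t').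
Proof. intros HM HD B t t' u v Huv; split; apply (par_SA_dir HM HD); auto. Qed.

Lemma par_SW_dir {V W} {adj : V -> V -> Prop} {A} {adjW : W -> W -> Prop} {phi t0} :
  median_graph adj -> orth_decomp adj A adjW phi t0 -> forall a b u v, adj u v ->
  crosses adj u v (SW A phi a) -> crosses adj u v (SW A phi b).
Proof.
  intros HM HD a b u v Huv (x&y&(t1&<-)&(t2&<-)&Hxy&HT).
  pose proof (mg_conn adj HM) as Hc.
  apply (theta_iff _ _ _ _ _ Hc) in HT.
  pose proof (dec_to_prod HM HD _ _ Hxy) as HP.
  destruct HP as [[H1 _]|[_ H2]]; [exfalso; simpl in H1; eapply (mg_irr adj HM); eauto|].
  destruct (dec_connA HM HD a b) as [n Hn].
  exists (phi (b,t1)), (phi (b,t2)). split; [exists t1; auto|]. split; [exists t2; auto|]. split.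
  - apply (dec_to_adj HM HD). right; simpl; auto.
  - apply (theta_iff _ _ _ _ _ Hc). eapply (transA HM HD); eauto.
Qed.

Lemma par_SW {V W} {adj : V -> V -> Prop} {A} {adjW : W -> W -> Prop} {phi t0} :
  median_graph adj -> orth_decomp adj A adjW phi t0 -> forall a b,
  parallel adj (SW A phi a) (SW A phi b).
Proof. intros HM HD a b u v Huv; split; apply (par_SW_dir HM HD); auto. Qed.

Lemma in_PA {V W} {adj : V -> V -> Prop} {A} {adjW : W -> W -> Prop} {phi t0} :
  median_graph adj -> orth_decomp adj A adjW phi t0 -> forall x y z p q,
  phi p = x -> phi q = y -> interval adj x y z -> exists r, phi r = z.
Proof.
  intros HM HD x y z p q Hp Hq Hz. apply (dec_PA HD).
  apply (hull_convex adj (parallel_union adj A) x y z); auto;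
  apply (proj2 (dec_PA HD _)); eauto.
Qed.

Lemma cvx_SW {V W} {adj : V -> V -> Prop} {A} {adjW : W -> W -> Prop} {phi t0} :
  median_graph adj -> orth_decomp adj A adjW phi t0 -> forall a, convex_sub adj (SW A phi a).
Proof.
  intros HM HD a. split.
  - intros x y z (t&Ht) (t'&Ht') Hz.
    destruct (in_PA HM HD x y z _ _ Ht Ht' Hz) as [[c s] Hcs].
    apply (interval_iff _ _ _ _ (mg_conn adj HM)) in Hz. subst x y z.
    rewrite <- !(dec_DP HM HD), !(dec_formula HM HD) in Hz.
    pose proof (Dd_tri adjW t s t' (dec_connW HD)). rewrite Dd_refl in Hz.
    assert (E : a = c) by (apply (Dd_zero _ _ _ (dec_connA HM HD)); lia). subst c.
    exists s; auto.
  - exists (phi (a,t0)), t0; auto.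
Qed.

Lemma cvx_SA {V W} {adj : V -> V -> Prop} {A} {adjW : W -> W -> Prop} {phi t0} :
  median_graph adj -> orth_decomp adj A adjW phi t0 -> forall (B : V -> Prop) t,
  gconvex adj B -> (exists b : sig A, B (proj1_sig b)) -> convex_sub adj (SA A B phi t).
Proof.
  intros HM HD B t HB Hne. split.
  - intros x y z (b1&Hb1&Ht) (b2&Hb2&Ht') Hz.
    destruct (in_PA HM HD x y z _ _ Ht Ht' Hz) as [[c s] Hcs].
    apply (interval_iff _ _ _ _ (mg_conn adj HM)) in Hz. subst x y z.
    rewrite <- !(dec_DP HM HD), !(dec_formula HM HD) in Hz.
    pose proof (Dd_tri (eA adj A) b1 c b2 (dec_connA HM HD)). pose proof (Dd_refl adjW t).
    assert (E : t = s) by (apply (Dd_zero _ _ _ (dec_connW HD)); lia). subst s.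
    assert (E2 : Dd (eA adj A) b1 c + Dd (eA adj A) c b2 = Dd (eA adj A) b1 b2) by lia.
    rewrite !(dec_DA HM HD) in E2.
    exists c. split; auto.
    apply (HB (proj1_sig b1) (proj1_sig b2)); auto.
    apply (interval_iff _ _ _ _ (mg_conn adj HM)); auto.
  - destruct Hne as [b Hb]. exists (phi (b,t)), b; auto.
Qed.

Lemma perp_super {V W W'} (adj : V -> V -> Prop) (A C C' : V -> Prop) (a : V) (Ha : A a)
  (adjW : W -> W -> Prop) phi t0 (adjW' : W' -> W' -> Prop) (psi : sig C * W' -> V) s0 (Ha' : C a) :
  median_graph adj -> orth_decomp adj A adjW phi t0 ->
  (forall x, C x <-> exists t, phi (exist A a Ha, t) = x) ->
  orth_decomp adj C adjW' psi s0 ->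
  (forall x, C' x <-> exists s, psi (exist C a Ha', s) = x) ->
  forall b, A b -> C' b.
Proof.
  intros HM HD HC HD' HC' b Hb.
  assert (Hpar : parallel adj C (SW A phi (exist A b Hb))).
  { apply par_ext with (SW A phi (exist A a Ha)); [intros; rewrite HC; reflexivity|].
    apply (par_SW HM HD). }
  pose proof (cvx_SW HM HD (exist A b Hb)) as Hcv.
  destruct (proj1 (dec_par HD' (SW A phi (exist A b Hb))) (conj Hcv Hpar)) as [s Hs].
  destruct (proj1 (Hs b)) as [c Hc].
  { exists t0. rewrite (dec_t0 HD). reflexivity. }
  pose proof (proj2_sig c) as Hc0. apply HC in Hc0 as [t Ht].
  assert (E1 : Dd adj b (proj1_sig c) = Dd adjW' s s0).
  { transitivity (Dd adj (psi (c,s)) (psi (c,s0))). { rewrite Hc, (dec_t0 HD'); reflexivity. }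
    rewrite <- (dec_DP HM HD'), (dec_formula HM HD'), Dd_refl. lia. }
  assert (E2 : Dd adj b a = Dd (eA adj C) c (exist C a Ha') + Dd adjW' s s0).
  { rewrite <- (dec_formula HM HD'), (dec_DP HM HD'), (dec_t0 HD'). simpl. rewrite Hc. reflexivity. }
  assert (E3 : Dd adj b (proj1_sig c) = Dd (eA adj A) (exist A b Hb) (exist A a Ha) + Dd adjW t0 t).
  { rewrite <- (dec_formula HM HD), (dec_DP HM HD), Ht, (dec_t0 HD). reflexivity. }
  assert (E4 : Dd adj b a = Dd (eA adj A) (exist A b Hb) (exist A a Ha) + Dd adjW t0 t0).
  { rewrite <- (dec_formula HM HD), (dec_DP HM HD), !(dec_t0 HD). reflexivity. }
  rewrite Dd_refl in E4.
  assert (Ec : c = exist C a Ha') by (apply (Dd_zero _ _ _ (dec_connA HM HD')); lia).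
  apply HC'. exists s. rewrite <- Ec. exact Hc.
Qed.

Theorem mainTheorem9 (V : Type) (adj : V -> V -> Prop) (F : V -> Prop) (f : V)
  (C1 C2 C3 : V -> Prop) :
  median_graph adj -> convex_sub adj F -> F f ->
  orth_compl adj F f C1 -> orth_compl adj C1 f C2 -> orth_compl adj C2 f C3 ->
  forall x, C3 x <-> C1 x.
Proof.
  intros HM HF Hf H1 H2 H3.
  destruct H1 as [HF1 [Hf1 [W1 [adjW1 [phi1 [t1 [HD1 HC1]]]]]]].
  destruct H2 as [HCv1 [Hf2 [W2 [adjW2 [phi2 [s0 [HD2 HC2]]]]]]].
  destruct H3 as [HCv2 [Hf3 [W3 [adjW3 [phi3 [r0 [HD3 HC3]]]]]]].
  assert (FC2 : forall b, F b -> C2 b)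
    by exact (perp_super adj F C1 C2 f Hf1 adjW1 phi1 t1 adjW2 phi2 s0 Hf2 HM HD1 HC1 HD2 HC2).
  assert (C1C3 : forall b, C1 b -> C3 b)
    by exact (perp_super adj C1 C2 C3 f Hf2 adjW2 phi2 s0 adjW3 phi3 r0 Hf3 HM HD2 HC2 HD3 HC3).
  intro x; split; [|apply C1C3].
  intro Hx. apply HC3 in Hx as [r Hr].
  assert (HPA : PA adj F x).
  { unfold PA, hull. intros Cc HCc HU. apply HU.
    exists (SA C2 F phi3 r). split; [|split].
    - apply (cvx_SA HM HD3); [apply (proj1 HF)|]. exists (exist C2 f (FC2 f Hf)); auto.
    - apply par_ext with (SA C2 F phi3 r0); [|apply (par_SA HM HD3)].
      intro y; split.
      + intros (b&Hb&<-). rewrite (dec_t0 HD3); auto.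
      + intro Hy. exists (exist C2 y (FC2 y Hy)). rewrite (dec_t0 HD3); auto.
    - exists (exist C2 f Hf3). auto. }
  apply (dec_PA HD1) in HPA as [[a t] Hat].
  assert (E1 : Dd adj x f = Dd (eA adj F) a (exist F f Hf1) + Dd adjW1 t t1).
  { rewrite <- (dec_formula HM HD1), (dec_DP HM HD1), Hat, (dec_t0 HD1). reflexivity. }
  assert (E2 : Dd adj x (proj1_sig a) = Dd (eA adj F) a a + Dd adjW1 t t1).
  { rewrite <- (dec_formula HM HD1), (dec_DP HM HD1), Hat, (dec_t0 HD1). reflexivity. }
  assert (E3 : Dd adj x f = Dd (eA adj C2) (exist C2 f Hf3) (exist C2 f Hf3) + Dd adjW3 r r0).
  { rewrite <- (dec_formula HM HD3), (dec_DP HM HD3), Hr, (dec_t0 HD3). reflexivity. }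
  assert (E4 : Dd adj x (proj1_sig a) =
    Dd (eA adj C2) (exist C2 f Hf3) (exist C2 (proj1_sig a) (FC2 _ (proj2_sig a))) + Dd adjW3 r r0).
  { rewrite <- (dec_formula HM HD3), (dec_DP HM HD3), Hr, (dec_t0 HD3). reflexivity. }
  rewrite !Dd_refl in *.
  assert (Ea : a = exist F f Hf1) by (apply (Dd_zero _ _ _ (dec_connA HM HD1)); lia).
  subst a. apply HC1. exists t. exact Hat.
Qed.
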